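(* There exists an $\mathrm{STC}$-formula $\varphi_M(x_1,x_2,y)$ over the vocabulary $\{E\}$ such that for every graph $G=(V,E)$ and all pairs $(v_1,v_2)\in V^2$, the set $\{u\in V\mid G\models\varphi_M[v_1,v_2,u]\}$ is the module spanned by $v_1$ and $v_2$.
   Context: Graphs are finite, simple, undirected, with nonempty vertex set, viewed as structures $(V,E)$. A module of $G=(V,E)$ is a nonempty $M\subseteq V$ such that every $u\in V\setminus M$ is adjacent either to all or to none of the vertices of $M$. For $v,w\in V$, $M_{v,w}$ is the intersection of all modules of $G$ containing $v$ and $w$ (this is the smallest module containing $v$ and $w$); $v,w$ span $M_{v,w}$. $\mathrm{STC}$ (symmetric transitive closure logic) is first-order logic extended by the operator $[\mathrm{stc}_{\bar u,\bar v}\psi](\bar u',\bar v')$, which holds iff $(\bar u',\bar v')$ lies in the symmetric transitive closure of the relation defined by $\psi$ on pairs of tuples. *)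

(* Defs.v *)
From mathcomp Require Import all_boot.
From Stdlib Require Relation_Operators.

Set Implicit Arguments.
Unset Strict Implicit.
Unset Printing Implicit Defensive.

Definition simple_graph (V : finType) (E : rel V) : Prop :=
  [/\ 0 < #|V|, symmetric E & irreflexive E].

Definition is_module (V : finType) (E : rel V) (M : {set V}) : bool :=
  (M != set0) &&
  [forall u in ~: M, [forall m in M, E u m] || [forall m in M, ~~ E u m]].

Definition span_module (V : finType) (E : rel V) (v w : V) : {set V} :=
  \bigcap_(M : {set V} | is_module E M && (v \in M) && (w \in M)) M.

Inductive stc_form : Type :=
  | FEq   : nat -> nat -> stc_form
  | FEdge : nat -> nat -> stc_form
  | FNot  : stc_form -> stc_form
  | FAnd  : stc_form -> stc_form -> stc_form
  | FOr   : stc_form -> stc_form -> stc_form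
  | FEx   : nat -> stc_form -> stc_form
  | FAll  : nat -> stc_form -> stc_form
  (* FStc k us vs psi us' vs'  is  [stc_{us,vs} psi](us',vs') with k-tuples *)
  | FStc  : forall k : nat, k.-tuple nat -> k.-tuple nat -> stc_form ->
            k.-tuple nat -> k.-tuple nat -> stc_form.

Fixpoint fv (phi : stc_form) : seq nat :=
  match phi with
  | FEq x y | FEdge x y => [:: x; y]
  | FNot p => fv p
  | FAnd p q | FOr p q => fv p ++ fv q
  | FEx x p | FAll x p => [seq z <- fv p | z != x]
  | FStc _ us vs p us' vs' =>
      [seq z <- fv p | (z \notin (us : seq nat)) && (z \notin (vs : seq nat))]
        ++ us' ++ vs'
  end.

Definition upd (V : Type) (a : nat -> V) (x : nat) (v : V) : nat -> V :=
  fun z => if z == x then v else a z.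

Fixpoint upds (V : Type) (a : nat -> V) (xs : seq nat) (vs : seq V) : nat -> V :=
  match xs, vs with
  | x :: xs', v :: vs' => upds (upd a x v) xs' vs'
  | _, _ => a
  end.

Definition stc_closure (T : Type) (R : T -> T -> Prop) : T -> T -> Prop :=
  Relation_Operators.clos_trans T (fun s t => R s t \/ R t s).

Fixpoint sat (V : finType) (E : rel V) (phi : stc_form) (a : nat -> V) : Prop :=
  match phi with
  | FEq x y => a x = a y
  | FEdge x y => E (a x) (a y)
  | FNot p => ~ sat E p a
  | FAnd p q => sat E p a /\ sat E q a
  | FOr p q => sat E p a \/ sat E q a
  | FEx x p => exists v : V, sat E p (upd a x v)
  | FAll x p => forall v : V, sat E p (upd a x v)
  | FStc k us vs p us' vs' =>
      stc_closure
        (fun s t : k.-tuple V => sat E p (upds (upds a us s) vs t))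
        [tuple of map a us'] [tuple of map a vs']
  end.

(* Main.v *)
From Stdlib Require Import ClassicalEpsilon Relation_Operators.
Require Import Defs.
From mathcomp Require Import all_boot.

Set Implicit Arguments.
Unset Strict Implicit.
Unset Printing Implicit Defensive.

Definition splitsF (z x y : nat) : stc_form :=
  FOr (FAnd (FEdge z x) (FNot (FEdge z y))) (FAnd (FNot (FEdge z x)) (FEdge z y)).

Definition psiF : stc_form :=
  FOr (FAnd (FEq 6 5) (FEq 7 4)) (FAnd (FEq 6 4) (FAnd (splitsF 7 4 5) (splitsF 5 4 7))).

Definition phiF : stc_form :=
  FEx 3 (@FStc 2 [tuple 4; 5] [tuple 6; 7] psiF [tuple 0; 1] [tuple 2; 3]).

Section Proof.
Variables (V : finType) (E : rel V).

Definition p0 (s : 2.-tuple V) := tnth s ord0.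
Definition p1 (s : 2.-tuple V) := tnth s (@Ordinal 2 1 isT).

Definition Rt (s t : 2.-tuple V) : Prop :=
  (p0 t = p1 s /\ p1 t = p0 s) \/
  (p0 t = p0 s /\ E (p1 t) (p0 s) != E (p1 t) (p1 s) /\ E (p1 s) (p0 s) != E (p1 s) (p1 t)).

Lemma splitsF_sat z x y b :
  sat E (splitsF z x y) b <-> E (b z) (b x) != E (b z) (b y).
Proof.
rewrite /=; case: (E (b z) (b x)); case: (E (b z) (b y)); simpl; intuition.
Qed.

Lemma tuple2E (s : 2.-tuple V) : val s = [:: p0 s; p1 s].
Proof. by case: s => [[|a [|b [|c l]]] //= Hs]; rewrite /p0 /p1 /tnth /=. Qed.

Lemma sat_psi b (s t : 2.-tuple V) :
  sat E psiF (upds (upds b [:: 4; 5] s) [:: 6; 7] t) <-> Rt s t.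
Proof.
rewrite (tuple2E s) (tuple2E t) /psiF /Rt.
have H := splitsF_sat.
rewrite /= in H.
simpl; rewrite !H /upd /=.
tauto.
Qed.

Lemma clos_ext (T : Type) (R R' : T -> T -> Prop) x y :
  (forall s t, R s t <-> R' s t) -> stc_closure R x y -> stc_closure R' x y.
Proof.
move=> HR; elim=> [s t [H|H]|s m t _ IH1 _ IH2].
- by apply: t_step; left; apply/HR.
- by apply: t_step; right; apply/HR.
- exact: t_trans IH1 IH2.
Qed.

Definition mk (x y : V) : 2.-tuple V := [tuple x; y].
Lemma p0_mk x y : p0 (mk x y) = x. Proof. by []. Qed.
Lemma p1_mk x y : p1 (mk x y) = y. Proof. by []. Qed.

Lemma swapR s : Rt s (mk (p1 s) (p0 s)).
Proof. by left. Qed.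

Lemma module_split (M : {set V}) x y z :
  is_module E M -> x \in M -> y \in M -> E z x != E z y -> z \in M.
Proof.
move=> /andP[_ /forallP H] xM yM Hz; apply/negPn/negP => zM.
have := H z; rewrite in_setC zM /= => /orP [/forallP A | /forallP A].
- by move: (A x) (A y) Hz; rewrite xM yM /= => -> ->.
- by move: (A x) (A y) Hz; rewrite xM yM /= => /negbTE -> /negbTE ->.
Qed.

Lemma sound (M : {set V}) s t : is_module E M -> stc_closure Rt s t ->
  p0 s \in M /\ p1 s \in M -> p0 t \in M /\ p1 t \in M.
Proof.
move=> HM; elim=> [{}s {}t [H|H]|{}s m {}t _ IH1 _ IH2]; last by move=> /IH1 /IH2.
- case: H => [[-> ->]|[-> [H1 H2]]] [A B] //; split => //.
  exact: module_split HM A B H1.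
- case: H => [[-> ->]|[<- [H1 H2]]] [A B] //; split => //.
  exact: module_split HM A B H2.
Qed.

Hypothesis symE : symmetric E.
Variables v w : V.
Let st := mk v w.
Let reach t := stc_closure Rt st t.

Lemma reach_trans t t' : reach t -> Rt t t' -> reach t'.
Proof. move=> H1 H2; apply: t_trans H1 _; apply: t_step; by left. Qed.

Lemma reach_st : reach st.
Proof.
apply: (@t_trans _ _ _ (mk w v)); apply: t_step; left; exact: swapR.
Qed.

Definition CP x := exists t, reach t /\ p0 t = x.
Definition Cb x : bool := if excluded_middle_informative (CP x) then true else false.
Lemma CbP x : Cb x <-> CP x.
Proof. rewrite /Cb; case: excluded_middle_informative => //. Qed.

Definition C : {set V} := [set x | Cb x].

Lemma inC x : x \in C <-> CP x.
Proof. by rewrite inE; apply: CbP. Qed.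

Lemma nosplit u t : u \notin C -> reach t -> E u (p0 t) = E u (p1 t).
Proof.
move=> uC rt; apply/eqP/negPn/negP => Hs; move/negP: uC; apply; apply/inC.
case: (boolP (E (p1 t) (p0 t) != E (p1 t) u)) => H1.
- have r1 : reach (mk (p0 t) u).
    apply: reach_trans rt _; right; rewrite p0_mk p1_mk; split => //; split => //.
  exists (mk u (p0 t)); split => //; exact: reach_trans r1 (swapR _).
- have H2 : E (p0 t) (p1 t) != E (p0 t) u.
    move: H1 Hs; rewrite negbK => /eqP H1; apply: contra => /eqP H2.
    by rewrite symE -H2 symE H1 symE.
  have r1 : reach (mk (p1 t) (p0 t)) by apply: reach_trans rt (swapR _).
  have r2 : reach (mk (p1 t) u).
    apply: reach_trans r1 _; right; rewrite !p0_mk !p1_mk; split => //; split => //.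
    by rewrite eq_sym.
  exists (mk u (p1 t)); split => //; exact: reach_trans r2 (swapR _).
Qed.

Lemma inv u : u \notin C -> forall t, reach t -> E u (p0 t) = E u v.
Proof.
move=> uC.
suff H : forall s t, stc_closure Rt s t -> reach s -> E u (p0 s) = E u v ->
  E u (p0 t) = E u v.
  by move=> t rt; apply: H rt reach_st _.
move=> s t; elim=> [{}s {}t [Hr|Hr]|{}s m {}t H1 IH1 _ IH2] rs Hs.
- have ns := nosplit uC rs.
  by case: Hr => [[-> _]|[-> _]] //; rewrite -ns.
- have rt : reach t by apply: t_trans rs _; apply: t_step; right.
  have ns := nosplit uC rt.
  case: Hr => [[E1 E2]|[E1 _]].
    by rewrite ns -E1.
  by rewrite -E1.
- apply: IH2; last exact: IH1.
  exact: t_trans rs H1.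
Qed.

Lemma C_module : is_module E C.
Proof.
apply/andP; split.
  apply/set0Pn; exists v; apply/inC; exists st; split => //; exact: reach_st.
apply/forallP => u; apply/implyP; rewrite in_setC => uC.
have H : forall m, m \in C -> E u m = E u v.
  by move=> m /inC [t [rt <-]]; apply: inv.
case hv: (E u v); apply/orP; [left|right]; apply/forallP => m; apply/implyP => mC;
  by rewrite (H m mC) hv.
Qed.

Lemma vC : v \in C.
Proof. apply/inC; exists st; split => //; exact: reach_st. Qed.
Lemma wC : w \in C.
Proof. apply/inC; exists (mk w v); split => //; exact: reach_trans reach_st (swapR _). Qed.

Lemma sat_phi_stc b :
  sat E (@FStc 2 [tuple 4; 5] [tuple 6; 7] psiF [tuple 0; 1] [tuple 2; 3]) b <->
  stc_closure Rt (mk (b 0) (b 1)) (mk (b 2) (b 3)).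
Proof.
change (stc_closure (fun s t : 2.-tuple V => sat E psiF (upds (upds b [:: 4;5] s) [:: 6;7] t))
   [tuple of map b [tuple 0;1]] [tuple of map b [tuple 2;3]] <->
  stc_closure Rt (mk (b 0) (b 1)) (mk (b 2) (b 3))).
have -> : [tuple of map b [tuple 0;1]] = mk (b 0) (b 1) by apply: val_inj.
have -> : [tuple of map b [tuple 2;3]] = mk (b 2) (b 3) by apply: val_inj.
split; apply: clos_ext => s t; [|symmetry]; exact: sat_psi.
Qed.

End Proof.

Theorem lemma3p8 :
  exists phi : stc_form,
    {subset fv phi <= [:: 0; 1; 2]} /\
    forall (V : finType) (E : rel V), simple_graph E ->
    forall v1 v2 : V,
      forall a : nat -> V, a 0 = v1 -> a 1 = v2 ->
        forall u : V, sat E phi (upd a 2 u) <-> u \in span_module E v1 v2.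
Proof.
exists phiF; split; first by move=> x; rewrite /=.
move=> V E [_ symE _] v w a a0 a1 u; split.
- move=> [y] /sat_phi_stc; rewrite /upd /= a0 a1 => Hc.
  apply/bigcapP => M /andP[/andP[HM vM] wM].
  by have [] := sound HM Hc.
- move=> /bigcapP H.
  have := H (C E v w); rewrite C_module // vC // wC // => /(_ isT) /inC [t [rt ut]].
  exists (p1 t); apply/sat_phi_stc; rewrite /upd /= a0 a1.
  have -> : mk u (p1 t) = t by apply: val_inj; rewrite /= tuple2E ut.
  exact: rt.
Qed.
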